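(* There is a constant $C$ such that for every $\ell\in\frac12\mathbb{N}$ and every $p\in\{-\ell,-\ell+1,\dots,\ell\}$, \[|c_p^\ell|\le C\min\left((1+\ell)^{-\frac14},\ \left||p|-\tfrac{\ell}{\sqrt2}\right|^{-\frac12}\right).\]
   Context: For $\ell\in\frac12\mathbb{N}=\{0,\frac12,1,\frac32,\dots\}$ and $p\in\{-\ell,-\ell+1,\dots,\ell\}$ (so $\ell\pm p$ are non-negative integers), $c_p^\ell=2^{-\ell}\int_0^{2\pi}(1+r^{-1}e^{-i\varphi})^{\ell-p}(1-re^{i\varphi})^{\ell+p}\frac{d\varphi}{2\pi}$, a quantity independent of $r>0$ (e.g. take $r=1$). By convention $0^{-1/2}=+\infty$, so the minimum is the first term when $|p|=\ell/\sqrt2$. *)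

(* Defs.v *)
From Stdlib Require Import Reals.
From Coquelicot Require Import Coquelicot.
Open Scope R_scope.

Definition eiphi (phi : R) : C := (cos phi, sin phi).
Definition emiphi (phi : R) : C := (cos phi, - sin phi).

(* integrand at r = 1, with ell - p = a and ell + p = b *)
Definition cint (a b : nat) (phi : R) : C :=
  Cmult (Cpow (Cplus 1 (emiphi phi)) a) (Cpow (Cminus 1 (eiphi phi)) b).

(* c_p^ell with ell = (a+b)/2, p = (b-a)/2, i.e. a = ell - p, b = ell + p *)
Definition ell_of (a b : nat) : R := (INR a + INR b) / 2.
Definition p_of (a b : nat) : R := (INR b - INR a) / 2.

Definition cpl (a b : nat) : C :=
  scal (Rpower 2 (- ell_of a b) / (2 * PI))
       (RInt (V := C_R_CompleteNormedModule) (cint a b) 0 (2 * PI)).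

(* min((1+ell)^{-1/4}, ||p| - ell/sqrt 2|^{-1/2}) with 0^{-1/2} = +oo *)
Definition minbound (l p : R) : R :=
  let d := Rabs (Rabs p - l / sqrt 2) in
  if Req_EM_T d 0 then Rpower (1 + l) (-1/4)
  else Rmin (Rpower (1 + l) (-1/4)) (Rpower d (-1/2)).

(* Main.v *)
Require Import Defs.
From Stdlib Require Import Reals Lra Lia ZArith.
From Coquelicot Require Import Coquelicot.
Open Scope R_scope.


Definition ez (m : Z) (phi : R) : C := (cos (IZR m * phi), sin (IZR m * phi)).
Definition Fr (r : R) (a b : nat) (m : Z) (phi : R) : C :=
  Cmult (ez m phi) (Cmult (Cpow (Cplus 1 (Cmult (RtoC (/ r)) (emiphi phi))) a)
                          (Cpow (Cminus 1 (Cmult (RtoC r) (eiphi phi))) b)).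

Fixpoint T0 (b : nat) (m : Z) : R :=
  match b with O => if Z.eqb m 0 then 1 else 0 | S b => T0 b m - T0 b (m+1) end.
Fixpoint T (a b : nat) (m : Z) : R :=
  match a with O => T0 b m | S a => T a b m + T a b (m-1) end.

Lemma ez_emi m phi : Cmult (ez m phi) (emiphi phi) = ez (m-1) phi.
Proof.
  unfold ez, emiphi, Cmult; simpl.
  rewrite minus_IZR. replace ((IZR m - 1) * phi) with (IZR m * phi - phi) by ring.
  rewrite cos_minus, sin_minus. f_equal; ring.
Qed.

Lemma ez_ei m phi : Cmult (ez m phi) (eiphi phi) = ez (m+1) phi.
Proof.
  unfold ez, eiphi, Cmult; simpl.
  rewrite plus_IZR. replace ((IZR m + 1) * phi) with (IZR m * phi + phi) by ring.
  rewrite cos_plus, sin_plus. f_equal; ring.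
Qed.

Lemma sin_mpi2 m : sin (IZR m * (2*PI)) = 0.
Proof. apply sin_eq_0_1. exists (2*m)%Z. rewrite mult_IZR. simpl. ring. Qed.

Lemma cos_mpi2 m : cos (IZR m * (2*PI)) = 1.
Proof.
  replace (IZR m * (2*PI)) with (2 * (IZR m * PI)) by ring.
  rewrite cos_2a_sin. rewrite sin_eq_0_1. unfold Rsqr; ring. exists m; ring.
Qed.

Lemma is_RInt_val {V : NormedModule R_AbsRing} (f : R -> V) a b (l l' : V) :
  is_RInt f a b l -> l = l' -> is_RInt f a b l'.
Proof. intros H ->; exact H. Qed.

Lemma is_RInt_cosm m : is_RInt (fun x => cos (IZR m * x)) 0 (2*PI) (if Z.eqb m 0 then 2*PI else 0).
Proof.
  destruct (Z.eqb_spec m 0) as [->|Hm].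
  - assert (H:= @is_RInt_const R_NormedModule 0 (2*PI) 1).
    match type of H with is_RInt _ _ _ ?v => assert (E : v = 2*PI) end.
    { change (scal (2*PI-0) 1) with (mult (2*PI-0) 1). unfold mult; simpl. ring. }
    rewrite E in H.
    eapply is_RInt_ext; [|exact H]. intros x _. simpl. rewrite Rmult_0_l, cos_0. reflexivity.
  - assert (Hm' : IZR m <> 0) by (apply not_0_IZR; auto).
    eapply is_RInt_val.
    apply (is_RInt_derive (fun x => sin (IZR m * x) / IZR m)).
    + intros x _. auto_derive; auto. field; auto.
    + intros x _. apply (ex_derive_continuous (fun x => cos (IZR m * x))). auto_derive; auto.
    + simpl. rewrite sin_mpi2, Rmult_0_r, sin_0. unfold minus, plus, opp; simpl. field. auto.
Qed.

Lemma is_RInt_sinm m : is_RInt (fun x => sin (IZR m * x)) 0 (2*PI) 0.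
Proof.
  destruct (Z.eqb_spec m 0) as [->|Hm].
  - assert (H:= @is_RInt_const R_NormedModule 0 (2*PI) 0).
    match type of H with is_RInt _ _ _ ?v => assert (E : v = 0) end.
    { change (scal (2*PI-0) 0) with (mult (2*PI-0) 0). unfold mult; simpl. ring. }
    rewrite E in H.
    eapply is_RInt_ext; [|exact H]. intros x _. simpl. rewrite Rmult_0_l, sin_0. reflexivity.
  - assert (Hm' : IZR m <> 0) by (apply not_0_IZR; auto).
    eapply is_RInt_val.
    apply (is_RInt_derive (fun x => - cos (IZR m * x) / IZR m)).
    + intros x _. auto_derive; auto. field; auto.
    + intros x _. apply (ex_derive_continuous (fun x => sin (IZR m * x))). auto_derive; auto.
    + simpl. rewrite cos_mpi2, Rmult_0_r, cos_0. unfold minus, plus, opp; simpl. field. auto.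
Qed.

Lemma is_RInt_ez m : is_RInt (V:=C_R_NormedModule) (ez m) 0 (2*PI) (RtoC (if Z.eqb m 0 then 2*PI else 0)).
Proof.
  unfold RtoC.
  apply (is_RInt_fct_extend_pair (U:=R_NormedModule) (V:=R_NormedModule) (ez m)).
  - simpl. apply is_RInt_cosm.
  - simpl. apply is_RInt_sinm.
Qed.

Lemma Cval_test (x y : C) (r : R) : minus x (scal r y) = Cminus x (Cmult (RtoC r) y).
Proof.
  rewrite scal_R_Cmult. reflexivity.
Qed.

Lemma Fr_S_b r m b phi : Fr r 0 (S b) m phi = Cminus (Fr r 0 b m phi) (Cmult (RtoC r) (Fr r 0 b (m+1) phi)).
Proof. unfold Fr. rewrite <- ez_ei. change (Cpow ?x (S b)) with (Cmult x (Cpow x b)).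
  generalize (ez m phi) (eiphi phi) (Cpow (1 - RtoC r * eiphi phi) b) (Cpow (1 + RtoC (/ r) * emiphi phi) 0). intros.
  ring. Qed.

Lemma Fr_S_a r m a b phi : Fr r (S a) b m phi = Cplus (Fr r a b m phi) (Cmult (RtoC (/r)) (Fr r a b (m-1) phi)).
Proof. unfold Fr. rewrite <- ez_emi. change (Cpow ?x (S a)) with (Cmult x (Cpow x a)).
  generalize (ez m phi) (emiphi phi) (Cpow (1 - RtoC r * eiphi phi) b) (Cpow (1 + RtoC (/ r) * emiphi phi) a). intros.
  ring. Qed.

Lemma Cmul11 (c : Complex.C) : c = Cmult c (Cmult 1 1).
Proof. ring. Qed.

Lemma is_RInt_Fr r (Hr : r <> 0) a : forall b m,
  is_RInt (V:=C_R_NormedModule) (Fr r a b m) 0 (2*PI) (RtoC (2*PI * powerRZ r (-m) * T a b m)).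
Proof.
  induction a as [|a IHa].
  - induction b as [|b IHb]; intro m.
    + eapply is_RInt_val. eapply is_RInt_ext; [|apply (is_RInt_ez m)].
      intros x _. unfold Fr. apply Cmul11.
      
      change (T 0 0 m) with (if Z.eqb m 0 then 1 else 0). f_equal. destruct (Z.eqb_spec m 0) as [->|]; simpl; ring.
    + eapply is_RInt_val. apply (is_RInt_ext (V:=C_R_NormedModule) (fun x => minus (Fr r 0 b m x) (scal r (Fr r 0 b (m+1) x)))).
      intros x _. rewrite Fr_S_b, scal_R_Cmult. reflexivity.
      
      apply (is_RInt_minus (V:=C_R_NormedModule)). apply IHb.
      apply (is_RInt_scal (V:=C_R_NormedModule)). apply IHb.
      rewrite scal_R_Cmult. change (minus ?x ?y) with (Cminus x y).
      change (T 0 (S b) m) with (T 0 b m - T 0 b (m+1)).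
      
      unfold RtoC, Cminus, Cmult, Cplus, Copp. simpl fst; simpl snd. f_equal; [|ring].
      
      rewrite Z.opp_add_distr, powerRZ_add by auto.
      replace (powerRZ r (Z.opp 1)) with (/ r) by (simpl; field; auto).
      change (T 0 b ?k) with (T0 b k). field. auto.
  - intros b m. eapply is_RInt_val. apply (is_RInt_ext (V:=C_R_NormedModule) (fun x => plus (Fr r a b m x) (scal (/r) (Fr r a b (m-1) x)))).
    intros x _. rewrite Fr_S_a, scal_R_Cmult. reflexivity.
    apply (is_RInt_plus (V:=C_R_NormedModule)). apply IHa.
    apply (is_RInt_scal (V:=C_R_NormedModule)). apply IHa.
    rewrite scal_R_Cmult. change (plus ?x ?y) with (Cplus x y).
    change (T (S a) b m) with (T a b m + T a b (m-1)).
    unfold RtoC, Cminus, Cmult, Cplus, Copp. simpl fst; simpl snd. f_equal; [|ring].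
    replace (- (m - 1))%Z with (- m + 1)%Z by ring.
    rewrite powerRZ_add by auto.
    replace (powerRZ r 1) with r by (simpl; ring). field. auto.
Qed.

Lemma cint_Fr a b phi : cint a b phi = Fr 1 a b 0 phi.
Proof.
  unfold cint, Fr, ez. simpl (IZR 0). rewrite Rmult_0_l, cos_0, sin_0. rewrite Rinv_1.
  replace (Cmult (RtoC 1) (emiphi phi)) with (emiphi phi) by ring.
  replace (Cmult (RtoC 1) (eiphi phi)) with (eiphi phi) by ring.
  change (1, 0) with (RtoC 1). ring.
Qed.

Lemma is_RInt_cint a b : is_RInt (V:=C_R_NormedModule) (cint a b) 0 (2*PI) (RtoC (2*PI * T a b 0)).
Proof.
  eapply is_RInt_val. eapply is_RInt_ext; [| apply (is_RInt_Fr 1 R1_neq_R0 a b 0)].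
  intros x _. symmetry. apply cint_Fr.
  f_equal. simpl. ring.
Qed.

Lemma Cmod_cpl a b : Cmod (cpl a b) = Rpower 2 (- ell_of a b) * Rabs (T a b 0).
Proof.
  unfold cpl. rewrite (is_RInt_unique (V:=C_R_CompleteNormedModule) (cint a b) 0 (2*PI) _ (is_RInt_cint a b)).
  rewrite scal_R_Cmult. rewrite Cmod_mult. rewrite !Cmod_R.
  rewrite Rabs_mult. rewrite (Rabs_right (2*PI)) by (generalize PI_RGT_0; lra).
  rewrite Rabs_div. rewrite (Rabs_right (2*PI)) by (generalize PI_RGT_0; lra).
  rewrite Rabs_right by (left; apply exp_pos).
  field. generalize PI_RGT_0; lra. generalize PI_RGT_0; lra.
Qed.

Lemma bound_T r (hr : 0 < r) a b (g : R -> R) lg :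
  (forall phi, 0 <= phi <= 2*PI -> Cmod (Fr r a b 0 phi) <= g phi) ->
  is_RInt g 0 (2*PI) lg -> 2*PI*Rabs (T a b 0) <= lg.
Proof.
  intros Hg Hi.
  assert (H := is_RInt_Fr r (Rgt_not_eq _ _ hr) a b 0).
  replace (2*PI*Rabs (T a b 0)) with (@norm R_AbsRing C_R_NormedModule (RtoC (2 * PI * powerRZ r (- 0) * T a b 0))).
  apply (norm_RInt_le (Fr r a b 0) g 0 (2*PI)); auto.
  generalize PI_RGT_0; lra.
  intros x Hx. rewrite <- Cmod_norm. auto.
  rewrite <- Cmod_norm, Cmod_R. simpl. rewrite Rmult_1_r, Rabs_mult, (Rabs_right (2*PI)). auto.
  generalize PI_RGT_0; lra.
Qed.

Lemma Cmod_sq (z : C) : Cmod z ^ 2 = fst z ^ 2 + snd z ^ 2.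
Proof. unfold Cmod. rewrite pow2_sqrt; auto. nra. Qed.

Lemma CmodU r phi : r <> 0 ->
  Cmod (Cplus 1 (Cmult (RtoC (/ r)) (emiphi phi))) ^ 2 = 1 + 2 * cos phi / r + / r ^ 2.
Proof.
  intros Hr. rewrite Cmod_sq. unfold emiphi, Cplus, Cmult, RtoC; simpl.
  field_simplify; auto. rewrite <- (sin2_cos2 phi). unfold Rsqr. field. auto.
Qed.

Lemma CmodW r phi :
  Cmod (Cminus 1 (Cmult (RtoC r) (eiphi phi))) ^ 2 = 1 - 2 * r * cos phi + r ^ 2.
Proof.
  rewrite Cmod_sq. unfold eiphi, Cminus, Cplus, Copp, Cmult, RtoC; simpl.
  pose proof (sin2_cos2 phi) as E. unfold Rsqr in E. nra.
Qed.

Lemma Cmod_Fr0 r a b phi :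
  Cmod (Fr r a b 0 phi) = Cmod (Cplus 1 (Cmult (RtoC (/ r)) (emiphi phi))) ^ a *
                          Cmod (Cminus 1 (Cmult (RtoC r) (eiphi phi))) ^ b.
Proof.
  unfold Fr. rewrite !Cmod_mult, !Cmod_pow.
  replace (Cmod (ez 0 phi)) with 1. ring.
  unfold ez, Cmod; simpl. rewrite Rmult_0_l, cos_0, sin_0. rewrite <- sqrt_1 at 1. f_equal. ring.
Qed.

Lemma bound_c r (hr : 0 < r) a b (M : R -> R) lM :
  (forall phi, 0 <= phi <= 2*PI -> Rpower 2 (- ell_of a b) * Cmod (Fr r a b 0 phi) <= M phi) ->
  is_RInt M 0 (2*PI) lM -> Cmod (cpl a b) <= lM / (2*PI).
Proof.
  intros HM Hi. rewrite Cmod_cpl.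
  assert (Hp : 0 < Rpower 2 (ell_of a b)) by apply exp_pos.
  assert (HPI := PI_RGT_0).
  assert (H := bound_T r hr a b (fun phi => Rpower 2 (ell_of a b) * M phi) (scal (Rpower 2 (ell_of a b)) lM)).
  change (scal (Rpower 2 (ell_of a b)) lM) with (Rpower 2 (ell_of a b) * lM) in H.
  rewrite Rpower_Ropp. apply Rmult_le_reg_l with (2 * PI * Rpower 2 (ell_of a b)). nra.
  replace (2 * PI * Rpower 2 (ell_of a b) * (/ Rpower 2 (ell_of a b) * Rabs (T a b 0))) with (2 * PI * Rabs (T a b 0)) by (field; lra).
  replace (2 * PI * Rpower 2 (ell_of a b) * (lM / (2 * PI))) with (Rpower 2 (ell_of a b) * lM) by (field; lra).
  apply H.
  - intros phi Hphi. specialize (HM phi Hphi). rewrite Rpower_Ropp in HM.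
    apply Rmult_le_reg_l with (/ Rpower 2 (ell_of a b)). apply Rinv_0_lt_compat; auto.
    rewrite <- Rmult_assoc, Rinv_l by lra. lra.
  - apply (is_RInt_scal (V:=R_NormedModule)). auto.
Qed.

Lemma is_RInt_h E c lo hi : 0 < E ->
  is_RInt (fun x => / (1 + E * (x - c) ^ 2)) lo hi
    ((atan (sqrt E * (hi - c)) - atan (sqrt E * (lo - c))) / sqrt E).
Proof.
  intros HE. assert (Hs : 0 < sqrt E) by (apply sqrt_lt_R0; auto).
  eapply is_RInt_val.
  apply (is_RInt_derive (fun x => atan (sqrt E * (x - c)) / sqrt E)).
  - intros x _. auto_derive; auto.
    replace (1 + sqrt E * (x + - c) * (sqrt E * (x + - c) * 1)) with (1 + (sqrt E * sqrt E) * (x-c)^2) by ring.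
    rewrite sqrt_sqrt by lra. field. split; [|lra]. assert (0 <= (x-c)^2) by (apply pow2_ge_0). nra.
  - intros x _. apply (ex_derive_continuous (fun x => / (1 + E * (x - c) ^ 2))). auto_derive. assert (0 <= (x-c)^2) by (apply pow2_ge_0). replace ((x + - c) * ((x + - c) * 1)) with ((x-c)^2) by ring. nra.
  - simpl. unfold minus, plus, opp; simpl. field. lra.
Qed.

Lemma atan_diff_le u v : atan u - atan v <= PI.
Proof. pose proof (atan_bound u); pose proof (atan_bound v); lra. Qed.

Lemma majorant r (hr : 0 < r) a b (B : R -> R) c0 E psi : 0 < E -> 0 <= c0 ->
  (forall phi, Rpower 2 (- ell_of a b) * Cmod (Fr r a b 0 phi) <= B (cos phi)) ->
  (forall phi, 0 <= phi <= PI -> B (cos phi) <= c0 * / (1 + E * (phi - psi) ^ 2)) ->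
  Cmod (cpl a b) <= c0 / sqrt E.
Proof.
  intros HE Hc0 HB Hpt.
  assert (HPI := PI_RGT_0). assert (Hs : 0 < sqrt E) by (apply sqrt_lt_R0; auto).
  set (I1 := (atan (sqrt E * (2*PI - psi)) - atan (sqrt E * (0 - psi))) / sqrt E).
  set (I2 := (atan (sqrt E * (2*PI - (2*PI-psi))) - atan (sqrt E * (0 - (2*PI-psi)))) / sqrt E).
  assert (Hint : is_RInt (fun phi => c0 * (/ (1 + E * (phi - psi) ^ 2) + / (1 + E * (phi - (2*PI-psi)) ^ 2))) 0 (2*PI) (c0 * (I1 + I2))).
  { apply (is_RInt_scal (V:=R_NormedModule)). apply (is_RInt_plus (V:=R_NormedModule)); apply is_RInt_h; auto. }
  eapply Rle_trans. eapply (bound_c r hr a b _ (c0 * (I1 + I2))); [|exact Hint].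
  - intros phi H. eapply Rle_trans. apply HB.
    assert (Hpos : forall x, 0 < / (1 + E * x ^ 2)).
    { intros x. apply Rinv_0_lt_compat. nra. }
    destruct (Rle_lt_dec phi PI) as [Hle|Hgt].
    + specialize (Hpt phi (conj (proj1 H) Hle)). specialize (Hpos (phi - (2*PI-psi))). nra.
    + specialize (Hpt (2*PI - phi) ltac:(lra)).
      replace (cos (2*PI - phi)) with (cos phi) in Hpt.
      replace ((2*PI - phi - psi)^2) with ((phi - (2*PI-psi))^2) in Hpt by ring.
      specialize (Hpos (phi - psi)). nra.
      rewrite cos_minus, cos_2PI, sin_2PI. ring.
  - assert (I1 <= PI / sqrt E) by (unfold I1; apply Rmult_le_compat_r; [left; apply Rinv_0_lt_compat; auto| apply atan_diff_le]).
    assert (I2 <= PI / sqrt E) by (unfold I2; apply Rmult_le_compat_r; [left; apply Rinv_0_lt_compat; auto| apply atan_diff_le]).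
    apply Rmult_le_reg_l with (2*PI). lra.
    replace (2 * PI * (c0 * (I1 + I2) / (2 * PI))) with (c0 * (I1 + I2)) by (field; lra).
    replace (2 * PI * (c0 / sqrt E)) with (c0 * (PI / sqrt E + PI / sqrt E)) by (field; lra).
    apply Rmult_le_compat_l; lra.
Qed.

Lemma L1 y : -1 <= y <= 3/2 -> 1 + y <= exp (y - y^2/10).
Proof.
  intros Hy. set (z := y - y^2/10).
  replace z with (z/2 + z/2) by field. rewrite exp_plus.
  assert (H1 := exp_ineq1_le (z/2)).
  assert (Hz : 0 <= 1 + z/2) by (unfold z; nra).
  assert (H2 : (1 + z/2) * (1 + z/2) <= exp (z/2) * exp (z/2)) by (apply Rmult_le_compat; lra).
  enough (1 + y <= (1 + z/2) * (1 + z/2)) by lra.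
  unfold z. assert (0 <= y^2 * ((1 - y/10)^2/4 - 1/10)).
  { apply Rmult_le_pos. nra. nra. }
  nra.
Qed.

Lemma pow_exp x n : exp x ^ n = exp (INR n * x).
Proof.
  induction n as [|n IH]. simpl. rewrite Rmult_0_l, exp_0. reflexivity.
  rewrite S_INR. simpl. rewrite IH. rewrite <- exp_plus. apply f_equal. ring.
Qed.

Lemma Gauss_ab (a b : nat) q t : 0 < q -> q * q = INR a * INR b -> (1 <= a)%nat ->
  0 <= 1 + q / INR a * t -> 0 <= 1 - q / INR b * t -> Rabs (q / INR b * t) <= 3/2 ->
  (1 + q / INR a * t) ^ a * (1 - q / INR b * t) ^ b <= exp (- INR a * t^2 / 10).
Proof.
  intros Hq Hqq Ha HX HY Hb.
  assert (HA : 1 <= INR a) by (apply (le_INR 1); auto).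
  assert (HB : 0 < INR b) by (destruct b; [simpl in Hqq; nra| apply lt_0_INR; lia]).
  assert (E1 : (1 + q / INR a * t) ^ a <= exp (q * t)).
  { replace (q * t) with (INR a * (q / INR a * t)) by (field; lra).
    rewrite <- pow_exp. apply pow_incr. split; auto. apply exp_ineq1_le. }
  assert (E2 : (1 - q / INR b * t) ^ b <= exp (- q * t - INR a * t^2/10)).
  { replace (- q * t - INR a * t^2/10) with (INR b * ((- (q / INR b * t)) - (- (q / INR b * t))^2/10)).
    rewrite <- pow_exp. apply pow_incr. split; auto.
    replace (1 - q / INR b * t) with (1 + (- (q / INR b * t))) by ring. apply L1.
    apply Rabs_le_between in Hb. lra.
    field_simplify; [|lra]. replace (q^2) with (INR a * INR b) by (simpl; lra). field. lra. }
  replace (exp (- INR a * t^2/10)) with (exp (q*t) * exp (- q * t - INR a * t^2/10)).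
  apply Rmult_le_compat; auto; apply pow_le; auto.
  rewrite <- exp_plus. apply f_equal. field.
Qed.

Lemma Gauss_ba (a b : nat) q t : 0 < q -> q * q = INR a * INR b -> (1 <= b)%nat ->
  0 <= 1 + q / INR a * t -> 0 <= 1 - q / INR b * t -> Rabs (q / INR a * t) <= 3/2 ->
  (1 + q / INR a * t) ^ a * (1 - q / INR b * t) ^ b <= exp (- INR b * t^2 / 10).
Proof.
  intros Hq Hqq Hb HX HY Ha.
  assert (HB : 1 <= INR b) by (apply (le_INR 1); auto).
  assert (HA : 0 < INR a) by (destruct a; [simpl in Hqq; nra| apply lt_0_INR; lia]).
  assert (E1 : (1 - q / INR b * t) ^ b <= exp (- q * t)).
  { replace (- q * t) with (INR b * (- (q / INR b * t))) by (field; lra).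
    rewrite <- pow_exp. apply pow_incr. split; auto.
    replace (1 - q / INR b * t) with (1 + (- (q / INR b * t))) by ring. apply exp_ineq1_le. }
  assert (E2 : (1 + q / INR a * t) ^ a <= exp (q * t - INR b * t^2/10)).
  { replace (q * t - INR b * t^2/10) with (INR a * ((q / INR a * t) - (q / INR a * t)^2/10)).
    rewrite <- pow_exp. apply pow_incr. split; auto.
    apply L1. apply Rabs_le_between in Ha. lra.
    field_simplify; [|lra]. replace (q^2) with (INR a * INR b) by (simpl; lra). field. lra. }
  replace (exp (- INR b * t^2/10)) with (exp (q * t - INR b * t^2/10) * exp (- q * t)).
  apply Rmult_le_compat; auto; apply pow_le; auto.
  rewrite <- exp_plus. apply f_equal. field.
Qed.

Lemma pow_sq_comm x n : (x ^ n) ^ 2 = (x ^ 2) ^ n.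
Proof. rewrite <- !pow_mult. f_equal. lia. Qed.

Lemma Rpower2_sq a b : Rpower 2 (- ell_of a b) ^ 2 = (/2) ^ a * (/2) ^ b.
Proof.
  simpl. rewrite Rmult_1_r. rewrite <- Rpower_plus.
  replace (- ell_of a b + - ell_of a b) with (- (INR a + INR b)) by (unfold ell_of; field).
  rewrite Rpower_Ropp, Rpower_plus, !Rpower_pow by lra.
  rewrite !pow_inv. field. split; apply pow_nonzero; lra.
Qed.

Lemma exp_le_inv w : 0 <= w -> exp (- w) <= / (1 + w).
Proof.
  intros Hw. rewrite exp_Ropp. apply Rinv_le_contravar. lra. apply exp_ineq1_le.
Qed.

Lemma gaussF (a b : nat) phi : (1 <= a)%nat -> (1 <= b)%nat ->
  Rpower 2 (- ell_of a b) * Cmod (Fr (sqrt (INR a * INR b) / INR b) a b 0 phi) <=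
  / (1 + (Rmin (INR a) (INR b) / 20) * (cos phi - (INR a - INR b) / (2 * sqrt (INR a * INR b))) ^ 2).
Proof.
  intros Ha Hb.
  assert (HA : 1 <= INR a) by (apply (le_INR 1); auto).
  assert (HB : 1 <= INR b) by (apply (le_INR 1); auto).
  set (A := INR a) in *. set (B := INR b) in *.
  assert (HAB : 0 < A * B) by nra.
  set (q := sqrt (A * B)).
  assert (Hq : 0 < q) by (apply sqrt_lt_R0; auto).
  assert (Hqq : q * q = A * B) by (apply sqrt_sqrt; lra).
  set (r := q / B). assert (Hr : 0 < r) by (unfold r; apply Rdiv_lt_0_compat; lra).
  set (u := cos phi). set (t := u - (A - B) / (2 * q)).
  assert (Hu := COS_bound phi). fold u in Hu.
  rewrite Cmod_Fr0.
  set (U := Cmod (Cplus 1 (Cmult (RtoC (/ r)) (emiphi phi)))).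
  set (W := Cmod (Cminus 1 (Cmult (RtoC r) (eiphi phi)))).
  assert (HU : U ^ 2 = 1 + 2 * u / r + / r ^ 2) by (apply CmodU; lra).
  assert (HW : W ^ 2 = 1 - 2 * r * u + r ^ 2) by apply CmodW.
  assert (U0 : 0 <= U) by apply Cmod_ge_0.
  assert (W0 : 0 <= W) by apply Cmod_ge_0.
  assert (HX : U ^ 2 * / 2 = 1 + q / A * t).
  { rewrite HU. unfold t, r. assert (Q2 : q^2 = A*B) by (simpl; lra).
    field_simplify; [ | split; lra | split; lra]. rewrite Q2. field. lra. }
  assert (HY : W ^ 2 * / 2 = 1 - q / B * t).
  { rewrite HW. unfold t, r. assert (Q2 : q^2 = A*B) by (simpl; lra).
    field_simplify; try (split; lra); try lra. rewrite Q2. field. lra. }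
  set (P := Rpower 2 (- ell_of a b) * (U ^ a * W ^ b)).
  assert (P0 : 0 <= P) by (unfold P; apply Rmult_le_pos; [left; apply exp_pos| apply Rmult_le_pos; apply pow_le; auto]).
  assert (HP2 : P ^ 2 = (1 + q / A * t) ^ a * (1 - q / B * t) ^ b).
  { unfold P. rewrite !Rpow_mult_distr, Rpower2_sq, !pow_sq_comm.
    rewrite <- HX, <- HY, !Rpow_mult_distr. ring. }
  assert (Hsq : forall x, 0 <= x ^ 2) by (intros; apply pow2_ge_0).
  assert (Ht : Rabs t <= 1 + Rabs (A - B) / (2 * q)).
  { unfold t. unfold Rminus at 1. eapply Rle_trans. apply Rabs_triang.
    rewrite Rabs_Ropp. apply Rplus_le_compat. apply Rabs_le; lra.
    rewrite Rabs_div, (Rabs_right (2*q)) by lra. lra. }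
  assert (HG : P ^ 2 <= exp (- Rmin A B * t ^ 2 / 10)).
  { rewrite HP2. assert (X0 : 0 <= 1 + q / A * t) by (rewrite <- HX; nra).
    assert (Y0 : 0 <= 1 - q / B * t) by (rewrite <- HY; nra).
    destruct (Rle_dec A B) as [Hle|Hlt].
    - rewrite Rmin_left by auto. apply Gauss_ab; auto.
      assert (q <= B) by nra.
      change (INR b) with B.
      rewrite Rabs_mult, Rabs_div, (Rabs_right q), (Rabs_right B) by lra.
      assert (EA : Rabs (A - B) = - (A - B)) by (apply Rabs_left1; lra). rewrite EA in Ht.
      apply Rle_trans with (q / B * (1 + - (A - B) / (2 * q))).
      apply Rmult_le_compat_l. apply Rdiv_le_0_compat; lra. auto.
      apply Rmult_le_reg_l with (2 * B). lra. field_simplify; lra.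
    - rewrite Rmin_right by lra. apply Gauss_ba; auto.
      assert (q <= A) by (apply Rsqr_incr_0_var; unfold Rsqr; nra).
      change (INR a) with A.
      rewrite Rabs_mult, Rabs_div, (Rabs_right q), (Rabs_right A) by lra.
      assert (EA : Rabs (A - B) = (A - B)) by (apply Rabs_right; lra). rewrite EA in Ht.
      apply Rle_trans with (q / A * (1 + (A - B) / (2 * q))).
      apply Rmult_le_compat_l. apply Rdiv_le_0_compat; lra. auto.
      apply Rmult_le_reg_l with (2 * A). lra. field_simplify; lra. }
  assert (HM : 0 <= Rmin A B) by (apply Rmin_glb; lra).
  fold U W. fold P.
  eapply Rle_trans. 2: apply exp_le_inv. 2: apply Rmult_le_pos; [lra | apply Hsq].
  assert (E : exp (- (Rmin A B / 20 * t^2)) ^ 2 = exp (- Rmin A B * t ^ 2 / 10)).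
  { rewrite pow_exp. apply f_equal. simpl. field. }
  rewrite <- E in HG. assert (0 < exp (- (Rmin A B / 20 * t ^ 2))) by apply exp_pos.
  apply Rsqr_incr_0_var. unfold Rsqr. simpl in HG |- *. rewrite !Rmult_1_r in *. lra. lra.
Qed.

Lemma sin_lin y : 0 <= y <= PI/2 -> y/3 <= sin y.
Proof.
  intros Hy. assert (HPI := PI_4). assert (HP := PI_RGT_0).
  destruct (SIN y) as [H _]; try lra.
  eapply Rle_trans; [|exact H].
  assert (E : sin_lb y = y - y^3/6 + y^5/120 - y^7/5040).
  { unfold sin_lb, sin_approx, sin_term. simpl. field. }
  rewrite E.
  assert (Hy2 : y^2 <= 4) by nra.
  assert (H1 : 0 <= y * (2/3 - y^2/6)) by (apply Rmult_le_pos; lra).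
  assert (H2 : 0 <= y^5 * (1/120 - y^2/5040)) by (apply Rmult_le_pos; [apply pow_le; lra| lra]).
  assert (E2 : y - y^3/6 + y^5/120 - y^7/5040 - y/3 = y * (2/3 - y^2/6) + y^5 * (1/120 - y^2/5040)) by field.
  lra.
Qed.

Lemma sin_ge c th : 0 <= c <= PI/2 -> c <= th <= PI - c -> sin c <= sin th.
Proof.
  intros Hc Hth.
  destruct (Rle_dec th (PI/2)).
  - apply sin_incr_1; lra.
  - rewrite <- (sin_PI_x th). apply sin_incr_1; lra.
Qed.

Lemma abs_sin_lin y : Rabs y <= PI -> Rabs y / 6 <= Rabs (sin (y/2)).
Proof.
  intros Hy. destruct (Rle_dec 0 y).
  - rewrite Rabs_right by lra. rewrite Rabs_right in Hy by lra.
    pose proof (sin_lin (y/2)). rewrite Rabs_right. lra.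
    apply Rle_ge. pose proof PI_RGT_0. apply sin_ge_0; lra.
  - rewrite Rabs_left by lra. rewrite Rabs_left in Hy by lra.
    pose proof (sin_lin (-y/2)). replace (y/2) with (- (-y/2)) by field. rewrite sin_neg.
    rewrite Rabs_Ropp. rewrite Rabs_right. lra.
    apply Rle_ge. pose proof PI_RGT_0. apply sin_ge_0; lra.
Qed.

Lemma tail_lemma (t w s d : R) : t = 2 * w ^ 2 + d -> 0 <= d -> Rabs s / 6 <= Rabs w ->
  s^4 / 324 <= t^2 /\ d / 18 * s^2 <= t^2.
Proof.
  intros Ht Hd Hw. assert (0 <= Rabs s) by apply Rabs_pos.
  assert (H1 : (Rabs s / 6)^2 <= w^2) by (rewrite <- (pow2_abs w); apply pow_incr; lra).
  replace ((Rabs s / 6)^2) with (Rabs s ^ 2 / 36) in H1 by field. rewrite pow2_abs in H1.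
  assert (Hs4 : s^4 = (s^2)^2) by ring.
  assert (0 <= s^2) by apply pow2_ge_0.
  assert (Ht0 : s^2/18 <= t) by lra.
  split.
  - rewrite Hs4. assert ((s^2/18)^2 <= t^2) by (apply pow_incr; lra). lra.
  - assert (d * (s^2/18) <= t * t) by (apply Rmult_le_compat; lra). simpl. lra.
Qed.

Lemma geo (x : R) : Rabs x <= 4/3 -> exists psi E0,
  0 <= psi <= PI /\ Rabs (1 - x^2) / 42 <= E0 /\
  forall phi, 0 <= phi <= PI ->
    (phi - psi)^4 / 324 <= (cos phi - x)^2 /\ E0 * (phi - psi)^2 <= (cos phi - x)^2.
Proof.
  intros Hx. assert (HP := PI_RGT_0).
  destruct (Rle_dec x 1) as [Hx1|Hx1]; [destruct (Rle_dec (-1) x) as [Hx2|Hx2]|].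
  -
    exists (acos x), ((1 - x^2)/36).
    destruct (acos_bound x) as [Ha1 Ha2].
    assert (Hx0 : 0 <= 1 - x*x) by (replace (1 - x*x) with ((1-x)*(1+x)) by ring; apply Rmult_le_pos; lra).
    split; [lra|]. split.
    { assert (0 <= 1 - x^2) by (replace (1 - x^2) with ((1-x)*(1+x)) by ring; apply Rmult_le_pos; lra).
      rewrite Rabs_right by lra. lra. }
    intros phi Hphi. set (psi := acos x) in *.
    assert (Hc : cos psi = x) by (apply cos_acos; lra).
    assert (Hs : sin psi ^ 2 = 1 - x^2).
    { unfold psi. rewrite sin_acos by lra. rewrite pow2_sqrt; unfold Rsqr; [ring| lra]. }
    rewrite <- Hc. rewrite form2.
    set (s := Rabs (phi - psi)).
    assert (Hsle : s <= PI) by (unfold s; apply Rabs_le; lra).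
    assert (S1 : s / 6 <= Rabs (sin ((phi - psi)/2))) by (apply abs_sin_lin; auto).
    assert (S2 : s / 6 <= sin ((phi + psi)/2)).
    { assert (0 <= s) by apply Rabs_pos.
      eapply Rle_trans. 2: apply (sin_ge (s/2)).
      pose proof (sin_lin (s/2) ltac:(lra)). lra. lra.
      unfold s. split; destruct (Rle_dec 0 (phi-psi)).
      rewrite Rabs_right; lra. rewrite Rabs_left; lra. rewrite Rabs_right; lra. rewrite Rabs_left; lra. }
    assert (S3 : sin psi / 2 <= sin ((phi + psi)/2)).
    { assert (Hsp : sin psi = 2 * sin (psi/2) * cos (psi/2)).
      { rewrite <- sin_2a. f_equal. field. }
      assert (0 <= sin (psi/2)) by (apply sin_ge_0; lra).
      assert (sin (psi/2) <= 1) by apply SIN_bound.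
      assert (0 <= cos (psi/2)) by (apply cos_ge_0; lra).
      assert (cos (psi/2) <= 1) by apply COS_bound.
      destruct (Rle_dec psi (PI/2)).
      - eapply Rle_trans. 2: apply (sin_ge (psi/2)). nra. lra. lra.
      - eapply Rle_trans. 2: apply (sin_ge ((PI - psi)/2)).
        replace ((PI - psi)/2) with (PI/2 - psi/2) by field. rewrite sin_shift. nra. lra. lra. }
    assert (S0 : 0 <= s) by apply Rabs_pos.
    assert (Hsq : (phi - psi)^2 = s^2) by (unfold s; rewrite <- pow2_abs; auto).
    rewrite Hsq. replace ((phi - psi)^4) with (s^2 * s^2) by (rewrite <- Hsq; ring).
    set (u := sin ((phi - psi)/2)) in *. set (v := sin ((phi + psi) / 2)) in *.
    assert (Hu2 : (s/6)^2 <= u^2) by (rewrite <- (pow2_abs u); apply pow_incr; lra).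
    assert (Hv2 : (s/6)^2 <= v^2) by (apply pow_incr; lra).
    assert (Hpsi0 : 0 <= sin psi) by (apply sin_ge_0; lra).
    assert (Hv3 : (sin psi / 2)^2 <= v^2) by (apply pow_incr; lra).
    replace ((-2 * u * v)^2) with (4 * u^2 * v^2) by ring.
    split.
    + assert ((s/6)^2 * (s/6)^2 <= u^2 * v^2) by (apply Rmult_le_compat; auto; apply pow2_ge_0).
      lra.
    + assert ((s/6)^2 * (sin psi / 2)^2 <= u^2 * v^2) by (apply Rmult_le_compat; auto; apply pow2_ge_0).
      replace ((sin psi / 2)^2) with ((1 - x^2)/4) in H by (rewrite <- Hs; field).
      rewrite Hc. lra.
  -
    exists PI, ((-1 - x)/18). split; [lra|]. split.
    { rewrite Rabs_left1. apply Rabs_le_between in Hx.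
      assert ((-(1 - x^2)) <= (-1 - x) * (7/3)) by nra. lra. nra. }
    intros phi Hphi.
    assert (E : cos phi - x = 2 * sin ((phi - PI)/2) ^ 2 + (-1 - x)).
    { replace phi with (2 * ((phi - PI)/2) + PI) at 1 by field.
      rewrite neg_cos, cos_2a_sin. unfold Rsqr. ring. }
    assert (S1 := abs_sin_lin (phi - PI) ltac:(apply Rabs_le; lra)).
    apply (tail_lemma _ (sin ((phi - PI)/2))); auto. lra.
  -
    exists 0, ((x - 1)/18). split; [lra|]. split.
    { rewrite Rabs_left1. apply Rabs_le_between in Hx.
      assert ((-(1 - x^2)) <= (x - 1) * (7/3)) by nra. lra. nra. }
    intros phi Hphi.
    assert (E : x - cos phi = 2 * sin ((phi - 0)/2) ^ 2 + (x - 1)).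
    { replace phi with (2 * ((phi - 0)/2)) at 1 by field.
      rewrite cos_2a_sin. unfold Rsqr. ring. }
    assert (S1 := abs_sin_lin (phi - 0) ltac:(apply Rabs_le; lra)).
    replace ((cos phi - x)^2) with ((x - cos phi)^2) by ring.
    apply (tail_lemma _ (sin ((phi - 0)/2))); auto. lra.
Qed.

Lemma inv_sq_le y : 0 <= y -> / (1 + y^2) <= 2 * / (1 + y).
Proof.
  intros Hy. apply Rmult_le_reg_l with ((1 + y^2) * (1 + y)). nra.
  field_simplify; try nra. 
Qed.

Lemma caseI_core (a b : nat) : (1 <= a)%nat -> (1 <= b)%nat ->
  9 * INR a >= INR b -> 9 * INR b >= INR a ->
  let A := INR a in let B := INR b in let q := sqrt (A * B) in
  let xs := (A - B) / (2 * q) in let Am := Rmin A B / 20 in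
  Rabs xs <= 4/3 /\
  exists E0, Rabs (1 - xs^2) / 42 <= E0 /\
   Cmod (cpl a b) <= 2 / sqrt (sqrt Am / 18) /\
   (0 < E0 -> Cmod (cpl a b) <= 1 / sqrt (Am * E0)).
Proof.
  intros Ha Hb H9a H9b A B q xs Am.
  change (INR a) with A in H9a, H9b. change (INR b) with B in H9a, H9b.
  assert (HA : 1 <= A) by (apply (le_INR 1); auto).
  assert (HB : 1 <= B) by (apply (le_INR 1); auto).
  assert (HAB : 0 < A * B) by nra.
  assert (Hq : 0 < q) by (apply sqrt_lt_R0; auto).
  assert (Hqq : q * q = A * B) by (apply sqrt_sqrt; lra).
  assert (Hxs : Rabs xs <= 4/3).
  { unfold xs. rewrite Rabs_div, (Rabs_right (2*q)) by lra.
    apply Rmult_le_reg_l with (2*q). lra. field_simplify; try lra.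
    apply Rsqr_incr_0_var. rewrite <- Rsqr_abs. unfold Rsqr.
    assert (0 <= (9*A - B) * (9*B - A)) by (apply Rmult_le_pos; lra).
    replace (8*q/3*(8*q/3)) with (64/9*(q*q)) by field. rewrite Hqq. lra. lra. }
  split; auto.
  destruct (geo xs Hxs) as [psi [E0 [Hpsi [HE0 Hgeo]]]].
  exists E0. split; auto.
  assert (HAm : 1/20 <= Am) by (unfold Am; apply Rmult_le_compat_r; [lra|apply Rmin_glb; lra]).
  assert (HG : forall phi, Rpower 2 (- ell_of a b) * Cmod (Fr (q / B) a b 0 phi) <= (fun u => / (1 + Am * (u - xs) ^ 2)) (cos phi)).
  { intros phi. apply gaussF; auto. }
  assert (Hr : 0 < q / B) by (apply Rdiv_lt_0_compat; lra).
  split.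
  - apply (majorant (q/B) Hr a b (fun u => / (1 + Am * (u - xs) ^ 2)) 2 (sqrt Am / 18) psi); auto.
    apply Rdiv_lt_0_compat; [apply sqrt_lt_R0|]; lra. lra.
    intros phi Hphi. destruct (Hgeo phi Hphi) as [G1 _].
    set (y := sqrt Am / 18 * (phi - psi)^2).
    assert (Hy : 0 <= y) by (unfold y; apply Rmult_le_pos; [apply Rdiv_le_0_compat; [apply sqrt_pos|lra]|apply pow2_ge_0]).
    eapply Rle_trans. 2: apply inv_sq_le; auto.
    apply Rinv_le_contravar. nra.
    apply Rplus_le_compat_l. unfold y.
    replace ((sqrt Am / 18 * (phi - psi) ^ 2) ^ 2) with (sqrt Am ^ 2 * ((phi - psi)^4 / 324)) by (field).
    rewrite pow2_sqrt by lra. apply Rmult_le_compat_l; lra.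
  - intros HE0p. apply (majorant (q/B) Hr a b (fun u => / (1 + Am * (u - xs) ^ 2)) 1 (Am * E0) psi); auto.
    nra. lra.
    intros phi Hphi. destruct (Hgeo phi Hphi) as [_ G2].
    rewrite Rmult_1_l. apply Rinv_le_contravar.
    assert (0 <= (phi - psi)^2) by apply pow2_ge_0.
    assert (0 <= Am * E0 * (phi - psi)^2) by (apply Rmult_le_pos; [apply Rmult_le_pos|]; lra). lra.
    apply Rplus_le_compat_l. rewrite Rmult_assoc. apply Rmult_le_compat_l; lra.
Qed.

Lemma bernoulli h n : 0 <= h -> 1 + INR n * h <= (1 + h) ^ n.
Proof.
  intros Hh. induction n as [|n IH]. simpl. lra.
  rewrite S_INR. simpl. assert (0 <= INR n) by apply pos_INR. nra.
Qed.

Lemma geom_poly n : (2/3) ^ n * (1 + INR n) <= 2.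
Proof.
  assert (H := bernoulli (1/2) n ltac:(lra)).
  assert (E : (2/3)^n * (1 + 1/2)^n = 1) by (rewrite <- Rpow_mult_distr; replace (2/3*(1+1/2)) with 1 by field; apply pow1).
  assert (0 <= (2/3)^n) by (apply pow_le; lra).
  assert (0 <= INR n) by apply pos_INR. nra.
Qed.

Lemma comb (a c : nat) : 50 ^ a * (50/81) ^ (9 * a + c) * (1 + INR a + INR (9 * a + c)) <= 20.
Proof.
  assert (EI : INR (9*a+c) = 9*INR a + INR c) by (rewrite plus_INR, mult_INR; simpl; ring).
  rewrite EI, pow_add, pow_mult.
  assert (H1 : 50 * (50/81)^9 <= 2/3) by (simpl; lra).
  assert (H2 : 0 <= 50 * (50/81)^9) by (simpl; lra).
  assert (Ha : 50 ^ a * ((50/81)^9)^a <= (2/3)^a).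
  { rewrite <- Rpow_mult_distr. apply pow_incr. lra. }
  assert (Hc : (50/81)^c <= (2/3)^c) by (apply pow_incr; lra).
  assert (G := geom_poly (a + c)). rewrite pow_add, plus_INR in G.
  assert (0 <= (50/81)^c) by (apply pow_le; lra).
  assert (0 <= 50 ^ a * ((50/81)^9)^a) by (apply Rmult_le_pos; apply pow_le; lra).
  assert (0 <= (2/3)^a) by (apply pow_le; lra).
  assert (0 <= (2/3)^c) by (apply pow_le; lra).
  assert (0 <= INR a) by apply pos_INR. assert (0 <= INR c) by apply pos_INR.
  assert (X : 50 ^ a * ((50/81)^9)^a * (50/81)^c <= (2/3)^a * (2/3)^c) by (apply Rmult_le_compat; auto).
  set (L := 1 + INR a + (9 * INR a + INR c)).
  assert (Y : L <= 10 * (1 + (INR a + INR c))) by (unfold L; lra).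
  assert (Z : 0 <= L) by (unfold L; lra).
  replace (50 ^ a * (((50 / 81) ^ 9) ^ a * (50 / 81) ^ c) * L) with ((50 ^ a * ((50/81)^9)^a * (50/81)^c) * L) by ring.
  apply Rle_trans with ((2/3)^a * (2/3)^c * L).
  apply Rmult_le_compat_r; auto.
  apply Rle_trans with ((2/3)^a * (2/3)^c * (10 * (1 + (INR a + INR c)))).
  apply Rmult_le_compat_l; auto. apply Rmult_le_pos; auto.
  replace ((2/3)^a * (2/3)^c * (10 * (1 + (INR a + INR c)))) with (10 * ((2/3)^a * (2/3)^c * (1 + (INR a + INR c)))) by ring. lra.
Qed.

Lemma const_bound r (hr : 0 < r) a b K0 :
  (forall phi, Cmod (Fr r a b 0 phi) <= K0) -> Cmod (cpl a b) <= Rpower 2 (- ell_of a b) * K0.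
Proof.
  intros H. assert (HPI := PI_RGT_0).
  eapply Rle_trans. apply (bound_c r hr a b (fun _ => Rpower 2 (- ell_of a b) * K0) ((2*PI - 0) * (Rpower 2 (- ell_of a b) * K0))).
  - intros phi _. apply Rmult_le_compat_l. left; apply exp_pos. auto.
  - apply (is_RInt_const (V:=R_NormedModule)).
  - right. field. lra.
Qed.

Lemma UW_bounds r phi : 0 < r ->
  Cmod (Cplus 1 (Cmult (RtoC (/ r)) (emiphi phi))) <= 1 + / r /\
  Cmod (Cminus 1 (Cmult (RtoC r) (eiphi phi))) <= 1 + r.
Proof.
  intros Hr. assert (Hc := COS_bound phi).
  assert (Hi : 0 < / r) by (apply Rinv_0_lt_compat; auto).
  split.
  - assert (H := CmodU r phi ltac:(lra)). assert (0 <= Cmod (Cplus 1 (Cmult (RtoC (/ r)) (emiphi phi)))) by apply Cmod_ge_0.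
    apply Rsqr_incr_0_var; [|lra]. unfold Rsqr. simpl in H. rewrite Rmult_1_r in H. rewrite H.
    replace (2 * cos phi / r) with (2 * cos phi * / r) by (unfold Rdiv; ring).
    replace (/ (r * (r * 1))) with (/r * /r) by (field; lra).
    assert (0 <= (1 - cos phi) * / r) by (apply Rmult_le_pos; lra). nra.
  - assert (H := CmodW r phi). assert (0 <= Cmod (Cminus 1 (Cmult (RtoC r) (eiphi phi)))) by apply Cmod_ge_0.
    apply Rsqr_incr_0_var; [|lra]. unfold Rsqr. simpl in H. rewrite Rmult_1_r in H. rewrite H. nra.
Qed.

Lemma caseII_ab a b : (9 * a <= b)%nat -> Cmod (cpl a b) ^ 2 * (1 + INR a + INR b) <= 20.
Proof.
  intros Hab. destruct (Nat.le_exists_sub _ _ Hab) as [c [Hc _]]. 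
  assert (Hr : 0 < / 9) by lra.
  assert (HK := const_bound (/9) Hr a b (10 ^ a * (10/9) ^ b)).
  assert (Hx : Cmod (cpl a b) <= Rpower 2 (- ell_of a b) * (10 ^ a * (10/9) ^ b)).
  { apply HK. intros phi. rewrite Cmod_Fr0. destruct (UW_bounds (/9) phi Hr) as [H1 H2].
    rewrite Rinv_inv in H1 |- *. apply Rmult_le_compat; try (apply pow_le; apply Cmod_ge_0).
    apply pow_incr. split. apply Cmod_ge_0. lra. apply pow_incr. split. apply Cmod_ge_0. lra. }
  assert (H0 := Cmod_ge_0 (cpl a b)).
  assert (Hsq : Cmod (cpl a b) ^ 2 <= 50 ^ a * (50/81) ^ b).
  { eapply Rle_trans. apply pow_incr. split; [exact H0| exact Hx].
    rewrite !Rpow_mult_distr, Rpower2_sq. right.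
    replace (50 ^ a) with ((/2)^a * (10^2)^a) by (rewrite <- Rpow_mult_distr; f_equal; lra).
    replace ((50/81) ^ b) with ((/2)^b * ((10/9)^2)^b) by (rewrite <- Rpow_mult_distr; f_equal; lra).
    rewrite <- !pow_sq_comm. ring. }
  assert (0 <= 1 + INR a + INR b) by (pose proof (pos_INR a); pose proof (pos_INR b); lra).
  assert (G := comb a c). replace (9 * a + c)%nat with b in G by lia.
  eapply Rle_trans; [| exact G]. apply Rmult_le_compat_r; auto.
Qed.

Lemma caseII_ba a b : (9 * b <= a)%nat -> Cmod (cpl a b) ^ 2 * (1 + INR a + INR b) <= 20.
Proof.
  intros Hab. destruct (Nat.le_exists_sub _ _ Hab) as [c [Hc _]]. 
  assert (Hr : 0 < 9) by lra.
  assert (HK := const_bound 9 Hr a b ((10/9) ^ a * 10 ^ b)).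
  assert (Hx : Cmod (cpl a b) <= Rpower 2 (- ell_of a b) * ((10/9) ^ a * 10 ^ b)).
  { apply HK. intros phi. rewrite Cmod_Fr0. destruct (UW_bounds 9 phi Hr) as [H1 H2].
    apply Rmult_le_compat; try (apply pow_le; apply Cmod_ge_0).
    apply pow_incr. split. apply Cmod_ge_0. lra. apply pow_incr. split. apply Cmod_ge_0. lra. }
  assert (H0 := Cmod_ge_0 (cpl a b)).
  assert (Hsq : Cmod (cpl a b) ^ 2 <= (50/81) ^ a * 50 ^ b).
  { eapply Rle_trans. apply pow_incr. split; [exact H0| exact Hx].
    rewrite !Rpow_mult_distr, Rpower2_sq. right.
    replace (50 ^ b) with ((/2)^b * (10^2)^b) by (rewrite <- Rpow_mult_distr; f_equal; lra).
    replace ((50/81) ^ a) with ((/2)^a * ((10/9)^2)^a) by (rewrite <- Rpow_mult_distr; f_equal; lra).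
    rewrite <- !pow_sq_comm. ring. }
  assert (0 <= 1 + INR a + INR b) by (pose proof (pos_INR a); pose proof (pos_INR b); lra).
  assert (G := comb b c). replace (9 * b + c)%nat with a in G by lia.
  apply Rle_trans with ((50/81)^a * 50^b * (1 + INR a + INR b)). apply Rmult_le_compat_r; auto.
  replace ((50/81)^a * 50^b * (1 + INR a + INR b)) with (50 ^ b * (50 / 81) ^ a * (1 + INR b + INR a)) by ring. exact G.
Qed.

Lemma Ld (A B : R) : 1 <= A -> 1 <= B ->
  let q := sqrt (A * B) in let xs := (A - B) / (2 * q) in
  let l := (A + B) / 2 in let p := (B - A) / 2 in
  Rabs (Rabs p - l / sqrt 2) / l <= Rabs (1 - xs ^ 2).
Proof.
  intros HA HB q xs l p.
  assert (HAB : 0 < A * B) by nra.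
  assert (Hq : 0 < q) by (apply sqrt_lt_R0; auto).
  assert (Hqq : q * q = A * B) by (apply sqrt_sqrt; lra).
  set (s2 := sqrt 2). assert (Hs2 : s2 * s2 = 2) by (apply sqrt_sqrt; lra).
  assert (Hs1 : 1 <= s2) by (rewrite <- sqrt_1; apply sqrt_le_1_alt; lra).
  set (P := Rabs p). assert (HP : 0 <= P) by apply Rabs_pos.
  assert (HP2 : P * P = p * p) by (unfold P; rewrite <- Rabs_mult; apply Rabs_right; nra).
  set (d := Rabs (P - l / s2)).
  assert (Hl : 1 <= l) by (unfold l; lra).
  assert (E1 : 1 - xs ^ 2 = (l * l - 2 * P * P) / (A * B)).
  { unfold xs. rewrite Rmult_assoc, HP2. unfold l, p. field_simplify; [|lra|lra].
    replace (q^2) with (A*B) by (simpl; lra). field. lra. }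
  assert (E2 : l * l - 2 * P * P = - (s2 * (P - l / s2)) * (l + s2 * P)).
  { field_simplify; [|lra]. replace (s2^2) with 2 by (simpl; lra). field. }
  assert (E3 : Rabs (l * l - 2 * P * P) = s2 * d * (l + s2 * P)).
  { rewrite E2. rewrite Rabs_mult, Rabs_Ropp, Rabs_mult. unfold d.
    rewrite (Rabs_right s2), (Rabs_right (l + s2 * P)) by nra. ring. }
  assert (Hd : 0 <= d) by apply Rabs_pos.
  assert (HABl : A * B <= l * l) by (unfold l; pose proof (Rle_0_sqr (A - B)); unfold Rsqr in *; nra).
  rewrite E1, Rabs_div, (Rabs_right (A * B)), E3 by lra.
  apply Rle_trans with (s2 * d * (l + s2 * P) / (l * l)).
  - apply Rmult_le_reg_l with (l * l). nra. field_simplify; try lra.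
    assert (0 <= l * d * (s2 - 1)) by (repeat apply Rmult_le_pos; lra).
    assert (0 <= d * s2 ^ 2 * P) by (repeat apply Rmult_le_pos; try apply pow_le; lra). lra.
  - apply Rmult_le_compat_l. assert (0 <= s2 * d * (l + s2 * P)) by (assert (0 <= s2*P) by (apply Rmult_le_pos; lra); repeat apply Rmult_le_pos; lra). lra.
    apply Rinv_le_contravar; lra.
Qed.

Lemma pow4_le_inv u K : 0 <= u -> 0 < K -> u ^ 4 <= K ^ 4 -> u <= K.
Proof.
  intros Hu HK H. destruct (Rle_dec u K); auto. exfalso.
  assert (K * K < u * u) by nra.
  assert (K * K * (K * K) < u * u * (u * u)) by (apply Rmult_le_0_lt_compat; nra).
  simpl in H. nra.
Qed.

Lemma conv4 x y K : 0 <= x -> 0 < y -> 0 < K -> x ^ 4 * y <= K ^ 4 -> x <= K * Rpower y (-1/4).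
Proof.
  intros Hx Hy HK H.
  assert (Hs1 : 0 < sqrt y) by (apply sqrt_lt_R0; auto).
  assert (Hs2 : 0 < sqrt (sqrt y)) by (apply sqrt_lt_R0; auto).
  replace (Rpower y (-1/4)) with (/ sqrt (sqrt y)).
  2: { replace (-1/4) with (- (/2 * /2)) by field. rewrite Rpower_Ropp, <- Rpower_mult.
       rewrite (Rpower_sqrt y) by auto. rewrite Rpower_sqrt by auto. reflexivity. }
  set (s := sqrt (sqrt y)).
  assert (Hs4 : s ^ 4 = y).
  { unfold s. replace 4%nat with (2 * 2)%nat by lia. rewrite pow_mult, !pow2_sqrt; lra. }
  assert (x * s <= K).
  { apply pow4_le_inv. unfold s; apply Rmult_le_pos; lra. exact HK. rewrite Rpow_mult_distr, Hs4. auto. }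
  apply Rmult_le_reg_r with s. unfold s; lra. unfold s in *. field_simplify; lra.
Qed.

Lemma conv2 x d K : 0 <= x -> 0 < d -> 0 < K -> x ^ 2 * d <= K ^ 2 -> x <= K * Rpower d (-1/2).
Proof.
  intros Hx Hd HK H.
  assert (Hs1 : 0 < sqrt d) by (apply sqrt_lt_R0; auto).
  replace (Rpower d (-1/2)) with (/ sqrt d).
  2: { replace (-1/2) with (- (/2)) by field. rewrite Rpower_Ropp, Rpower_sqrt; auto. }
  assert (x * sqrt d <= K).
  { apply Rsqr_incr_0_var; [| lra]. unfold Rsqr. replace (x * sqrt d * (x * sqrt d)) with (x^2 * (sqrt d * sqrt d)) by ring.
    rewrite sqrt_sqrt by lra. simpl in H |- *. lra. }
  apply Rmult_le_reg_r with (sqrt d). lra. field_simplify; lra.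
Qed.

Lemma d_le_l a b : Rabs (Rabs (p_of a b) - ell_of a b / sqrt 2) <= ell_of a b.
Proof.
  unfold p_of, ell_of. pose proof (pos_INR a). pose proof (pos_INR b).
  set (l := (INR a + INR b)/2).
  assert (HP : Rabs ((INR b - INR a)/2) <= l) by (unfold l; apply Rabs_le; lra).
  assert (HP0 := Rabs_pos ((INR b - INR a)/2)).
  assert (Hs1 : 1 <= sqrt 2) by (rewrite <- sqrt_1; apply sqrt_le_1_alt; lra).
  assert (Hl : 0 <= l) by (unfold l; lra).
  assert (0 <= l / sqrt 2 <= l).
  { split. apply Rdiv_le_0_compat; lra. apply Rmult_le_reg_r with (sqrt 2). lra. field_simplify; nra. }
  apply Rabs_le. lra.
Qed.

Lemma C12 a b :
  let x := Cmod (cpl a b) in let l := ell_of a b in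
  let d := Rabs (Rabs (p_of a b) - l / sqrt 2) in
  x ^ 4 * (1 + l) <= 100 ^ 4 /\ (0 < d -> x ^ 2 * d <= 100 ^ 2).
Proof.
  intros x l d.
  assert (Hx : 0 <= x) by apply Cmod_ge_0.
  assert (Hdl : d <= l) by apply d_le_l.
  assert (HA0 := pos_INR a). assert (HB0 := pos_INR b).
  assert (Hl : l = (INR a + INR b) / 2) by reflexivity.
  assert (Hx2 : 0 <= x ^ 2) by apply pow2_ge_0.
  destruct (le_lt_dec (9 * a) b) as [H1|H1]; [|destruct (le_lt_dec (9 * b) a) as [H2|H2]].
  - assert (H := caseII_ab a b H1). fold x in H.
    assert (x ^ 2 * (1 + l) <= 20) by (apply Rle_trans with (x^2 * (1 + INR a + INR b)); [apply Rmult_le_compat_l; lra| auto]).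
    split.
    + assert (x ^ 2 <= 20) by nra.
      replace (x^4 * (1 + l)) with (x^2 * (x^2 * (1 + l))) by ring.
      assert (x ^ 2 * (x ^ 2 * (1 + l)) <= 20 * 20) by (apply Rmult_le_compat; try nra). simpl. lra.
    + intros Hd. assert (x ^ 2 * d <= x ^ 2 * (1 + l)) by (apply Rmult_le_compat_l; lra). simpl in *. lra.
  - assert (H := caseII_ba a b H2). fold x in H.
    assert (x ^ 2 * (1 + l) <= 20) by (apply Rle_trans with (x^2 * (1 + INR a + INR b)); [apply Rmult_le_compat_l; lra| auto]).
    split.
    + assert (x ^ 2 <= 20) by nra.
      replace (x^4 * (1 + l)) with (x^2 * (x^2 * (1 + l))) by ring.
      assert (x ^ 2 * (x ^ 2 * (1 + l)) <= 20 * 20) by (apply Rmult_le_compat; try nra). simpl. lra.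
    + intros Hd. assert (x ^ 2 * d <= x ^ 2 * (1 + l)) by (apply Rmult_le_compat_l; lra). simpl in *. lra.
  - assert (Ha : (1 <= a)%nat) by lia. assert (Hb : (1 <= b)%nat) by lia.
    assert (R1 : 9 * INR a >= INR b) by (apply Rle_ge; replace 9 with (INR 9) by (simpl; ring); rewrite <- mult_INR; apply le_INR; lia).
    assert (R2 : 9 * INR b >= INR a) by (apply Rle_ge; replace 9 with (INR 9) by (simpl; ring); rewrite <- mult_INR; apply le_INR; lia).
    destruct (caseI_core a b Ha Hb R1 R2) as [Hxs [E0 [HE0 [HL HD]]]].
    fold x in HL, HD.
    assert (HA : 1 <= INR a) by (apply (le_INR 1); auto).
    assert (HB : 1 <= INR b) by (apply (le_INR 1); auto).
    set (Am := Rmin (INR a) (INR b) / 20) in *.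
    assert (HAm : l / 100 <= Am).
    { unfold Am. rewrite Hl. unfold Rmin. destruct (Rle_dec (INR a) (INR b)); lra. }
    assert (Hl1 : 1 <= l) by lra.
    split.
    + set (t := sqrt (sqrt Am / 18)) in *.
      assert (Ht : 0 < t) by (unfold t; apply sqrt_lt_R0; apply Rdiv_lt_0_compat; [apply sqrt_lt_R0|]; lra).
      assert (Ht4 : t ^ 4 = Am / 324).
      { unfold t. replace 4%nat with (2 * 2)%nat by lia. rewrite pow_mult, pow2_sqrt.
        replace ((sqrt Am / 18)^2) with ((sqrt Am)^2 / 324) by field. rewrite pow2_sqrt; lra.
        apply Rdiv_le_0_compat; [apply sqrt_pos| lra]. }
      assert (Hxt : x * t <= 2) by (apply Rmult_le_reg_r with (/ t); [apply Rinv_0_lt_compat; auto| field_simplify; lra]).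
      assert (Hxt4 : (x * t) ^ 4 <= 2 ^ 4) by (apply pow_incr; split; [apply Rmult_le_pos; lra| auto]).
      rewrite Rpow_mult_distr, Ht4 in Hxt4.
      assert (x ^ 4 * l <= x ^ 4 * (100 * Am)) by (apply Rmult_le_compat_l; [apply pow_le|]; lra).
      assert (0 <= x ^ 4) by (apply pow_le; lra).
      assert (x ^ 4 * (1 + l) <= x ^ 4 * (2 * l)) by (apply Rmult_le_compat_l; lra).
      simpl in *. lra.
    + intros Hd.
      assert (HLd := Ld (INR a) (INR b) HA HB). cbv zeta in HLd. rewrite <- Hl in HLd.
      change (Rabs (Rabs ((INR b - INR a) / 2) - l / sqrt 2)) with d in HLd.
      assert (HdE : d <= 42 * l * E0).
      { apply Rmult_le_reg_r with (/ l). apply Rinv_0_lt_compat; lra.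
        replace (42 * l * E0 * / l) with (42 * E0) by (field; lra). unfold Rdiv in HLd. lra. }
      assert (HE0p : 0 < E0) by nra.
      specialize (HD HE0p).
      assert (HAE : 0 < Am * E0) by nra.
      assert (Hs : 0 < sqrt (Am * E0)) by (apply sqrt_lt_R0; auto).
      assert (Hxs2 : x * sqrt (Am * E0) <= 1) by (apply Rmult_le_reg_r with (/ sqrt (Am * E0)); [apply Rinv_0_lt_compat; auto| field_simplify; lra]).
      assert (Hxs3 : (x * sqrt (Am * E0)) ^ 2 <= 1) by (replace 1 with (1^2) by ring; apply pow_incr; split; [apply Rmult_le_pos; lra| auto]).
      rewrite Rpow_mult_distr, pow2_sqrt in Hxs3 by lra.
      assert (x ^ 2 * d <= x ^ 2 * (42 * l * E0)) by (apply Rmult_le_compat_l; lra).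
      assert (x ^ 2 * (42 * l * E0) <= x ^ 2 * (4200 * (Am * E0))).
      { apply Rmult_le_compat_l; auto. nra. }
      simpl in *. lra.
Qed.

Theorem propositionA5 :
  exists K : R, forall a b : nat,
    Cmod (cpl a b) <= K * minbound (ell_of a b) (p_of a b).
Proof.
  exists 100. intros a b.
  destruct (C12 a b) as [H1 H2].
  assert (Hx : 0 <= Cmod (cpl a b)) by apply Cmod_ge_0.
  assert (Hl : 0 <= ell_of a b) by (unfold ell_of; pose proof (pos_INR a); pose proof (pos_INR b); lra).
  unfold minbound. cbv zeta.
  destruct (Req_EM_T (Rabs (Rabs (p_of a b) - ell_of a b / sqrt 2)) 0) as [E|E].
  - apply conv4; auto; lra.
  - assert (Hd : 0 < Rabs (Rabs (p_of a b) - ell_of a b / sqrt 2)).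
    { pose proof (Rabs_pos (Rabs (p_of a b) - ell_of a b / sqrt 2)). lra. }
    unfold Rmin. destruct (Rle_dec _ _).
    + apply conv4; auto; lra.
    + apply conv2; auto; lra.
Qed.
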